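(* Let $k\ge 1$ be the cache size. In both the discard-predictions setup and the phase-predictions setup, there is no deterministic online paging algorithm that is $(\alpha,\beta,\gamma)$-competitive with either $\alpha+\beta<k$ or $\alpha+(k-1)\gamma<k$.
   Context: Paging: there is a universe $U$ of pages and a cache holding at most $k$ pages, initially empty. Requests $r_1,\dots,r_n\in U$ arrive online. If the requested page is not in the cache (a page fault), it must be loaded, evicting a cached page if the cache holds $k$ pages. The cost is the number of page faults; $\mathrm{OPT}(I)$ is the minimum offline cost on request sequence $I$. Along with each request $r_i$ the online algorithm receives a prediction bit $p_i\in\{0,1\}$ (which may be arbitrary). An algorithm is $(\alpha,\beta,\gamma)$-competitive (with $\alpha,\beta,\gamma\ge0$) if there is a constant $b$ (possibly depending on $k$) such that for every instance $I$ and all predictions $p$, $\mathrm{ALG}(I,p)\le \alpha\,\mathrm{OPT}(I)+\beta\,\eta_0+\gamma\,\eta_1+b$. Discard-predictions setup: fix the optimal offline algorithm LFD (on a fault with full cache, evict a cached page never requested again if one exists, otherwise the cached page whose next request is furthest in the future; ties broken by a fixed rule). Ground truth: $p_i^*=0$ if LFD keeps $r_i$ in cache until its next request (or to the end if none), $p_i^*=1$ if LFD evicts $r_i$ before it is requested again. Errors: $\eta_h=|\{i\in[n]: p_i=h,\ p_i^*=1-h\}|$. Phase-predictions setup: partition the requests into $k$-phases (the first starts at $r_1$; each phase is a maximal contiguous segment with at most $k$ distinct pages; the next starts right after). For $r_i$ in phase $j$: $p_i^*=0$ if page $r_i$ is requested in phase $j+1$, else $p_i^*=1$. Errors: $\eta_h$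 = number of counted requests $i$ with $p_i=h$, $p_i^*=1-h$, where counted requests are, for each non-last phase $j$ and each page requested in phase $j$, only the last request to that page within phase $j$. *)

(* Defs.v *)
From mathcomp Require Import all_boot.
From Stdlib Require Import Reals.

Set Implicit Arguments.
Unset Strict Implicit.
Unset Printing Implicit Defensive.

(* Pages are natural numbers (universe U = nat).  An instance is a request
   sequence I : seq nat; predictions are p : nat -> bool, p i being the
   prediction bit attached to request I_i (0-indexed). *)

(* On a fault with a full cache, the algorithm chooses the page to     *)
(* evict from the history of (request, prediction) pairs seen so far   *)
(* (including the current one) and the current cache content.  If the  *)
(* returned page is not cached, the head of the cache is evicted       *)
(* (any total function thus encodes a legal strategy, and every legal  *)
(* deterministic strategy is encoded by some function).                *)
Definition Alg := seq (nat * bool) -> seq nat -> nat.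

Definition evict (cache : seq nat) (c : nat) : seq nat :=
  if c \in cache then rem c cache else behead cache.

Fixpoint alg_run (k : nat) (A : Alg) (hist : seq (nat * bool))
    (cache : seq nat) (rest : seq (nat * bool)) : nat :=
  match rest with
  | [::] => 0
  | rp :: rest' =>
      let h := rcons hist rp in
      if rp.1 \in cache then alg_run k A h cache rest'
      else (alg_run k A h
              (rp.1 :: (if size cache < k then cache else evict cache (A h cache)))
              rest').+1
  end.

Definition alg_cost (k : nat) (A : Alg) (I : seq nat) (p : nat -> bool) : nat :=
  alg_run k A [::] [::] (zip I (map p (iota 0 (size I)))).

Fixpoint opt_from (k : nat) (cache : seq nat) (I : seq nat) : nat :=
  match I with
  | [::] => 0
  | r :: I' =>
      if r \in cache then opt_from k cache I'
      else if size cache < k then (opt_from k (r :: cache) I').+1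
      else (foldr minn (opt_from k (r :: behead cache) I')
                  (map (fun c => opt_from k (r :: rem c cache) I') cache)).+1
  end.

Definition OPT (k : nat) (I : seq nat) : nat := opt_from k [::] I.

(* LFD with a fixed tie-breaking rule tb.  tb I j cands chooses, at     *)
(* time j on instance I, among the cached pages cands never requested  *)
(* again (arbitrary fixed rule; a non-candidate answer defaults to the *)
(* first candidate).                                                   *)
Definition TieRule := seq nat -> nat -> seq nat -> nat.

Definition furthest (cache fut : seq nat) : nat :=
  foldr (fun c best => if index best fut < index c fut then c else best)
        (head 0 cache) cache.

Definition lfd_victim (tb : TieRule) (I : seq nat) (j : nat)
    (cache fut : seq nat) : nat :=
  let nev := [seq c <- cache | c \notin fut] in
  if nev != [::] then
    (let c := tb I j nev in if c \in nev then c else head 0 nev)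
  else furthest cache fut.

Fixpoint lfd_run (k : nat) (tb : TieRule) (I : seq nat) (j : nat)
    (cache : seq nat) (rest : seq nat) : seq (option nat) :=
  match rest with
  | [::] => [::]
  | r :: fut =>
      if r \in cache then None :: lfd_run k tb I j.+1 cache fut
      else if size cache < k then None :: lfd_run k tb I j.+1 (r :: cache) fut
      else let v := lfd_victim tb I j cache fut in
           Some v :: lfd_run k tb I j.+1 (r :: rem v cache) fut
  end.

Definition lfd_evictions (k : nat) (tb : TieRule) (I : seq nat) :=
  lfd_run k tb I 0 [::] I.

(* index of the next request to page I_i after i, or size I if none *)
Definition next_req (I : seq nat) (i : nat) : nat :=
  i.+1 + index (nth 0 I i) (drop i.+1 I).

(* discard ground truth: true (=1) iff LFD evicts r_i strictly between i
   and its next request (or the end of the sequence if none). *)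
Definition discard_truth (k : nat) (tb : TieRule) (I : seq nat) (i : nat) : bool :=
  let ev := lfd_evictions k tb I in
  has (fun j => (i < j) && (j < next_req I i) && (nth None ev j == Some (nth 0 I i)))
      (iota 0 (size I)).

Definition eta_discard (k : nat) (tb : TieRule) (I : seq nat) (p : nat -> bool)
    (h : bool) : nat :=
  count (fun i => (p i == h) && (discard_truth k tb I i == ~~ h)) (iota 0 (size I)).

(* k-phases.  phase_ids gives, for each request, the index of its phase *)
(* (greedy maximal segments with at most k distinct pages).            *)
Fixpoint phase_run (k : nat) (cur : seq nat) (ph : nat) (rest : seq nat) : seq nat :=
  match rest with
  | [::] => [::]
  | r :: rest' =>
      if r \in cur then ph :: phase_run k cur ph rest'
      else if size cur < k then ph :: phase_run k (r :: cur) ph rest'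
      else ph.+1 :: phase_run k [:: r] ph.+1 rest'
  end.

Definition phase_ids (k : nat) (I : seq nat) : seq nat := phase_run k [::] 0 I.

Definition phase_of (k : nat) (I : seq nat) (i : nat) : nat := nth 0 (phase_ids k I) i.

(* phase ground truth: false (=0) iff page r_i is requested in the next phase *)
Definition phase_truth (k : nat) (I : seq nat) (i : nat) : bool :=
  ~~ has (fun i' => (phase_of k I i' == (phase_of k I i).+1) && (nth 0 I i' == nth 0 I i))
         (iota 0 (size I)).

Definition counted (k : nat) (I : seq nat) (i : nat) : bool :=
  (phase_of k I i < phase_of k I (size I).-1) &&
  ~~ has (fun i' => (i < i') && (phase_of k I i' == phase_of k I i)
                    && (nth 0 I i' == nth 0 I i))
         (iota 0 (size I)).

Definition eta_phase (k : nat) (I : seq nat) (p : nat -> bool) (h : bool) : nat :=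
  count (fun i => counted k I i && (p i == h) && (phase_truth k I i == ~~ h))
        (iota 0 (size I)).

Definition competitive (k : nat) (A : Alg)
    (eta : seq nat -> (nat -> bool) -> bool -> nat) (a bt g : R) : Prop :=
  exists b : R, forall (I : seq nat) (p : nat -> bool),
    (INR (alg_cost k A I p) <=
       a * INR (OPT k I) + bt * INR (eta I p false) + g * INR (eta I p true) + b)%R.

(* Main.v *)
Require Import Defs.
From mathcomp Require Import all_boot zify.
From Stdlib Require Import Reals Lra.
Set Implicit Arguments.
Unset Strict Implicit.
Unset Printing Implicit Defensive.


Lemma count_inj (P Q : pred nat) (f : nat -> nat) n m :
  (forall i, i < n -> P i -> f i < m /\ Q (f i)) ->
  (forall i i', i < n -> i' < n -> P i -> P i' -> f i = f i' -> i = i') ->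
  count P (iota 0 n) <= count Q (iota 0 m).
Proof.
move=> Hf Hinj.
rewrite -!size_filter.
rewrite -(size_map f).
apply: uniq_leq_size.
  rewrite map_inj_in_uniq ?filter_uniq ?iota_uniq //.
  move=> i i'; rewrite !mem_filter !mem_iota /= !add0n => /andP[Pi ri] /andP[Pi' ri'].
  exact: Hinj.
move=> y /mapP[i]; rewrite mem_filter mem_iota add0n /= => /andP[Pi ri] ->.
have [h1 h2] := Hf i ri Pi.
by rewrite mem_filter h2 mem_iota add0n h1.
Qed.

Lemma count_iota_ext (P : pred nat) n m :
  count (fun j => (j < n) && P j || (n <= j)) (iota 0 (n + m)) <= count P (iota 0 n) + m.
Proof.
rewrite iotaD count_cat add0n; apply: leq_add.
  rewrite -!size_filter; apply: eq_leq; congr size; apply: eq_in_filter => j.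
  rewrite mem_iota add0n /= => jn; by rewrite jn /= leqNgt jn orbF.
by rewrite -[m in _ <= m](size_iota n m) count_size.
Qed.

Lemma full_cover k (cache : seq nat) r :
  uniq cache -> (forall c, c \in cache -> c < k.+1) -> size cache = k ->
  r \notin cache -> r < k.+1 -> forall x, x < k.+1 -> x != r -> x \in cache.
Proof.
move=> uc sub sz rn rk x xk xr.
have sub2 : {subset cache <= rem r (iota 0 k.+1)}.
  move=> c cc; rewrite (mem_rem_uniq _ (iota_uniq _ _)); apply/andP; split.
    by apply/eqP => e; move: rn; rewrite -e cc.
  by rewrite mem_iota add0n sub.
have := uniq_min_size uc sub2.
rewrite size_rem ?size_iota ?sz; last by rewrite mem_iota add0n rk.
case/(_ (leqnn _)) => _ eq.
rewrite eq (mem_rem_uniq _ (iota_uniq _ _)); apply/andP; split => //.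
by rewrite mem_iota add0n xk.
Qed.

Definition missing k (c : seq nat) := head 0 [seq x <- iota 0 k.+1 | x \notin c].

Lemma missingP k c : size c <= k -> (missing k c \notin c) && (missing k c < k.+1).
Proof.
move=> sz.
have : [seq x <- iota 0 k.+1 | x \notin c] != [::].
  apply/eqP => e.
  have sub : {subset iota 0 k.+1 <= c}.
    move=> x xi; apply/negPn/negP => xn.
    have : x \in [seq x <- iota 0 k.+1 | x \notin c] by rewrite mem_filter xn xi.
    by rewrite e.
  have := uniq_leq_size (iota_uniq 0 k.+1) sub; rewrite size_iota => h; move: sz; rewrite leqNgt h. done.
rewrite /missing; case E: [seq x <- iota 0 k.+1 | x \notin c] => [|y s] // _.
have : y \in [seq x <- iota 0 k.+1 | x \notin c] by rewrite E inE eqxx.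
by rewrite mem_filter mem_iota /= => /andP[-> ].
Qed.

Fixpoint adv k (A : Alg) (q : bool) n (hist : seq (nat * bool)) (cache : seq nat) : seq nat :=
  match n with
  | 0 => [::]
  | n'.+1 => let r := missing k cache in let h := rcons hist (r, q) in
      r :: adv k A q n' h (r :: (if size cache < k then cache else evict cache (A h cache)))
  end.

Lemma size_evict c x : size (evict c x) = (size c).-1.
Proof. rewrite /evict; case: ifP => h; by rewrite ?size_rem ?size_behead. Qed.

Lemma adv_props k A q n hist cache : 1 <= k -> size cache <= k ->
  size (adv k A q n hist cache) = n /\
  all (fun x => x < k.+1) (adv k A q n hist cache) /\
  alg_run k A hist cache (zip (adv k A q n hist cache) (nseq n q)) = n.
Proof.
move=> k1; elim: n hist cache => [|n IH] hist cache sz //=.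
have /andP[mn mk] := missingP sz.
set c2 := (_ :: _).
have sz2 : size c2 <= k.
  rewrite /c2 /=; case: ifP => h; first by [].
  rewrite size_evict; lia.
have [h1 [h2 h3]] := IH (rcons hist (missing k cache, q)) c2 sz2.
split; first by rewrite h1.
split; first by rewrite mk h2.
by rewrite (negbTE mn) h3.
Qed.

Lemma map_cst (T : Type) (q : bool) (s : seq T) : map (fun _ => q) s = nseq (size s) q.
Proof. by elim: s => //= x s ->. Qed.

Lemma alg_cost_adv k A q n : 1 <= k ->
  let I := adv k A q n [::] [::] in
  alg_cost k A I (fun _ => q) = n /\ size I = n /\ all (fun x => x < k.+1) I.
Proof.
move=> k1 I; have [h1 [h2 h3]] := @adv_props k A q n [::] [::] k1 (leq0n _).
split; last by [].
rewrite /alg_cost map_cst size_iota /I h1; exact: h3.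
Qed.

Lemma alg_run_distinct k A hist cache (rest : seq (nat * bool)) :
  uniq (unzip1 rest) -> (forall x, x \in unzip1 rest -> x \notin cache) ->
  alg_run k A hist cache rest = size rest.
Proof.
elim: rest hist cache => [|[r b] rest IH] hist cache //= /andP[rn u] H.
rewrite (negbTE (H r _)) ?inE ?eqxx //=; congr S; apply: IH => // x xr.
rewrite inE negb_or; apply/andP; split.
  by apply/eqP => e; move: rn; rewrite -e xr.
case: ifP => _; first by apply: H; rewrite inE xr orbT.
rewrite /evict; case: ifP => _.
  by apply/negP => /mem_rem; apply/negP; apply: H; rewrite inE xr orbT.
by apply/negP => /mem_behead; apply/negP; apply: H; rewrite inE xr orbT.
Qed.

Lemma alg_cost_iota k A n p : alg_cost k A (iota 0 n) p = n.
Proof.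
rewrite /alg_cost alg_run_distinct ?size_zip ?size_map ?size_iota ?minnn //.
by rewrite unzip1_zip ?size_map ?iota_uniq.
Qed.

Lemma opt_le_size k cache I : opt_from k cache I <= size I.
Proof.
elim: I cache => [|r I IH] cache //=.
case: ifP => _; first by apply: leq_trans (IH _) _.
case: ifP => _; first by rewrite ltnS IH.
rewrite ltnS; apply: leq_trans (IH (r :: behead cache)).
elim: (map _ _) => [|y s IHs] //=; exact: leq_trans (geq_minr _ _) IHs.
Qed.

Lemma furthest_props (cache fut : seq nat) : cache != [::] ->
  furthest cache fut \in cache /\
  forall c, c \in cache -> index c fut <= index (furthest cache fut) fut.
Proof.
rewrite /furthest; case: cache => [|x0 l] // _; rewrite [head _ _]/=.
set g := (fun c best => if index best fut < index c fut then c else best).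
suff H : forall (s : seq nat) y0, let y := foldr g y0 s in
   (y \in y0 :: s) /\ index y0 fut <= index y fut /\ forall c, c \in s -> index c fut <= index y fut.
  have [h1 [h2 h3]] := H (x0 :: l) x0.
  split; first by move: h1; rewrite inE => /orP[/eqP ->|]; rewrite ?inE ?eqxx.
  exact: h3.
move=> s y0; elim: s => [|c s [h1 [h2 h3]]] /=; first by rewrite inE eqxx.
rewrite {1 3 5}/g; case: ifP => lt.
  split; first by rewrite !inE eqxx orbT.
  split; first by apply: leq_trans h2 (ltnW lt).
  move=> c'; rewrite inE => /orP[/eqP -> //|/h3 ?]; exact: leq_trans _ (ltnW lt).
split; first by move: h1; rewrite !inE => /orP[->|->]; rewrite ?orbT.
split=> // c'; rewrite inE => /orP[/eqP ->|/h3 //]; by rewrite leqNgt lt.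
Qed.

Lemma victim_in tb I j (cache fut : seq nat) : cache != [::] ->
  lfd_victim tb I j cache fut \in cache.
Proof.
move=> ne; rewrite /lfd_victim; case: ifP => h.
  set c := tb _ _ _; case: ifP => hc.
    by move: hc; rewrite mem_filter => /andP[].
  move: h; case E: [seq _ <- _ | _] => [|y s] // _ /=.
  have : y \in [seq c0 <- cache | c0 \notin fut] by rewrite E inE eqxx.
  by rewrite mem_filter => /andP[].
by have [] := furthest_props fut ne.
Qed.

Lemma foldr_minn_le (f : nat -> nat) x0 (l : seq nat) v : v \in l ->
  foldr minn x0 (map f l) <= f v.
Proof.
elim: l => [|y l IH] //=; rewrite inE => /orP[/eqP ->|/IH h]; first exact: geq_minl.
exact: leq_trans (geq_minr _ _) h.
Qed.

Lemma opt_le_lfd k tb I (rest : seq nat) : 1 <= k -> forall j cache, size cache <= k ->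
  opt_from k cache rest <= (k - size cache) + count isSome (lfd_run k tb I j cache rest).
Proof.
move=> k1; elim: rest => [|r fut IH] j cache sz //=.
case: ifP => hin; first by apply: IH.
case: ifP => hs.
  have := IH j.+1 (r :: cache) hs; rewrite /=; lia.
have ne : cache != [::] by apply/eqP => e; rewrite e /= k1 in hs.
set v := lfd_victim _ _ _ _ _.
have vin : v \in cache by apply: victim_in.
have sz2 : size (r :: rem v cache) = size cache.
  by rewrite /= size_rem // prednK // lt0n size_eq0.
have := IH j.+1 (r :: rem v cache); rewrite sz2 => /(_ sz) h.
rewrite /= add1n addnS ltnS.
apply: leq_trans (foldr_minn_le _ _ vin) _.
by apply: leq_trans h _; rewrite leq_add2r.
Qed.

Lemma size_lfd_run k tb I j cache rest : size (lfd_run k tb I j cache rest) = size rest.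
Proof.
elim: rest j cache => [|r fut IH] j cache //=; by case: ifP => _; [|case: ifP => _]; rewrite /= IH.
Qed.

Lemma lfd_skip k tb I m : forall j cache rest, (forall y, y \in take m rest -> y \in cache) ->
  count isSome (lfd_run k tb I j cache rest) = count isSome (lfd_run k tb I (j + m) cache (drop m rest)).
Proof.
elim: m => [|m IH] j cache [|r fut] H //=; rewrite ?addn0 //.
rewrite H ?inE ?eqxx //= addnS -addSn; apply: IH => y yt; apply: H; by rewrite inE yt orbT.
Qed.

Lemma victim_cases tb I j (cache fut : seq nat) :
  let v := lfd_victim tb I j cache fut in
  (v \in cache) && (v \notin fut) \/
  ([seq c <- cache | c \notin fut] = [::] /\ v = furthest cache fut).
Proof.
rewrite /lfd_victim; case: ifP => h.
  left; set c := tb _ _ _; case: ifP => hc; first by rewrite mem_filter andbC in hc.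
  move: h; case E: [seq _ <- _ | _] => [|y s] // _ /=.
  have : y \in [seq c0 <- cache | c0 \notin fut] by rewrite E inE eqxx.
  by rewrite mem_filter andbC.
by right; move/negbFE/eqP: h.
Qed.

Lemma lfd_spacing k tb I : 1 <= k -> forall N rest j cache, size rest <= N ->
  uniq cache -> (forall c, c \in cache -> c < k.+1) -> size cache <= k ->
  all (fun x => x < k.+1) rest ->
  count isSome (lfd_run k tb I j cache rest) <= (size rest + k.-1) %/ k.
Proof.
move=> k1; elim=> [|N IH] rest j cache szN uc cb sz fa.
  by case: rest szN fa.
case: rest szN fa => [|r fut] //= szN /andP[rk fk].
have mono' : (size fut + k.-1) %/ k <= ((size fut).+1 + k.-1) %/ k by apply: leq_div2r; lia.
case: ifP => hin.
  by apply: leq_trans (IH fut _ cache _ uc cb sz fk) mono'.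
case: ifP => hs.
  apply: leq_trans (IH fut _ (r :: cache) _ _ _ _ fk) mono' => //.
  - by rewrite /= hin.
  - by move=> c; rewrite inE => /orP[/eqP ->|/cb].
have hs' : k <= size cache by rewrite leqNgt hs.
have szk : size cache = k by apply/eqP; rewrite eqn_leq sz hs'.
have ne : cache != [::] by apply/eqP => e; rewrite e /= k1 in hs.
set v := lfd_victim _ _ _ _ _.
have vin : v \in cache by apply: victim_in.
set c2 := r :: rem v cache.
have uc2 : uniq c2.
  rewrite /c2 /= rem_uniq // andbT; apply/negP => /mem_rem; by rewrite hin.
have cb2 : forall c, c \in c2 -> c < k.+1.
  by move=> c; rewrite inE => /orP[/eqP ->|/mem_rem /cb].
have sz2 : size c2 = k by rewrite /c2 /= size_rem // prednK // lt0n size_eq0.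
have cover : forall x, x < k.+1 -> x != v -> x \in c2.
  move=> x xk xv; case: (eqVneq x r) => [->|xr]; first exact: mem_head.
  rewrite in_cons (negbTE xr) /= rem_mem //; exact: (full_cover uc cb szk (negbT hin) rk xk xr).
have pos : 0 < ((size fut).+1 + k.-1) %/ k by rewrite divn_gt0; lia.
rewrite [X in X <= _]/= add1n.
case: (victim_cases tb I j cache fut) => [/andP[_ vf]|[nev vdef]].
  rewrite (@lfd_skip k tb I (size fut)) ?take_size ?drop_size //=.
  move=> y yf; apply: cover; first by move/allP: fk => /(_ y yf).
  by apply/eqP => e; move: vf; rewrite -/v -e yf.
set m := index v fut.
have vmax := furthest_props fut ne; rewrite -vdef in vmax; case: vmax => _ vmax.
have infut : forall c, c \in cache -> c \in fut.
  move=> c cc; apply/negPn/negP => cf.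
  have : c \in [seq c <- cache | c \notin fut] by rewrite mem_filter cf cc.
  by rewrite nev.
have tk : forall y, y \in take m fut -> y \in c2.
  move=> y yt; apply: cover.
    by move/allP: fk => /(_ y (mem_take yt)).
  apply/eqP => e.
  have : index y (take m fut) < size (take m fut) by rewrite index_mem.
  rewrite size_take; set d := index y (take m fut) => dlt.
  have dm : d < m by move: dlt; case: ifP => // /negbT; rewrite -leqNgt => h1 h2; exact: leq_trans h2 h1.
  have := nth_index 0 yt; rewrite -/d nth_take // => hy.
  have := before_find 0 dm; rewrite /= hy e eqxx. by [].
have mk : k.-1 <= m.
  have := uniq_leq_size (rem_uniq v uc) (_ : {subset rem v cache <= take m fut}).
  rewrite size_rem // szk size_take => h.
  have : k.-1 <= (if m < size fut then m else size fut).
    apply: h => c cr.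
    have cc := mem_rem cr.
    have cv : c != v by move: cr; rewrite (mem_rem_uniq _ uc) => /andP[].
    have cfut := infut c cc.
    have vfut := infut v vin.
    have lt : index c fut < m.
      rewrite ltn_neqAle vmax // andbT; apply/eqP => e.
      by move: cv; rewrite -(nth_index 0 cfut) e (nth_index 0 vfut) eqxx.
    rewrite -(nth_index 0 cfut) -(nth_take 0 lt); apply: mem_nth.
    rewrite size_take; case: ifP => //; rewrite index_mem //.
  by case: ifP => // /negbT; rewrite -leqNgt => h1 h2; exact: leq_trans h2 h1.
rewrite (@lfd_skip k tb I m) //.
have msz : m <= size fut by apply: index_size.
have h := IH (drop m fut) (j.+1 + m) c2.
have h2 : count isSome (lfd_run k tb I (j.+1 + m) c2 (drop m fut)) <= (size fut - m + k.-1) %/ k.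
  rewrite -size_drop; apply: (h _ uc2 cb2).
  - by rewrite size_drop; apply: leq_trans (leq_subr _ _) _; rewrite -ltnS.
  - by rewrite sz2.
  - by apply/allP => y /mem_drop yd; exact: (allP fk y yd).
apply: leq_trans (_ : ((size fut - m + k.-1) + k) %/ k <= _).
  rewrite divnDr ?dvdnn // divnn k1 addn1 ltnS; exact: h2.
apply: leq_div2r; lia.
Qed.

Definition wit (P : pred nat) n := nth 0 (iota 0 n) (find P (iota 0 n)).

Lemma witP (P : pred nat) n : has P (iota 0 n) ->
  [/\ wit P n < n, P (wit P n) & forall j, j < wit P n -> ~~ P j].
Proof.
move=> h; have fl : find P (iota 0 n) < n by rewrite -{2}(size_iota 0 n) -has_find.
rewrite /wit nth_iota // add0n; split => //.
  by have := nth_find 0 h; rewrite nth_iota.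
move=> j jl; have := before_find 0 jl; rewrite nth_iota ?add0n ?(ltn_trans jl fl) // => ->.
by [].
Qed.

Lemma NR (I : seq nat) i i' : i < i' -> i' < next_req I i -> nth 0 I i' != nth 0 I i.
Proof.
rewrite /next_req => h1 h2.
have -> : i' = i.+1 + (i' - i.+1) by lia.
rewrite -nth_drop; have dl : i' - i.+1 < index (nth 0 I i) (drop i.+1 I).
  move: h2; set z := index _ _; move: z => z; lia.
by have := before_find 0 dl; rewrite /= => ->.
Qed.

Lemma next_req_le (I : seq nat) i : i < size I -> next_req I i <= size I.
Proof.
rewrite /next_req => h; have := index_size (nth 0 I i) (drop i.+1 I); rewrite size_drop => hz; by rewrite -(subnKC h) leq_add2l.
Qed.

Lemma next_req_nth (I : seq nat) i : next_req I i < size I -> nth 0 I (next_req I i) = nth 0 I i.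
Proof.
rewrite /next_req => h.
have : index (nth 0 I i) (drop i.+1 I) < size (drop i.+1 I) by rewrite size_drop; lia.
by rewrite index_mem => /(nth_index 0); rewrite nth_drop.
Qed.

Section LFD.
Variables (k : nat) (tb : TieRule) (I : seq nat).

Definition lout t (c : seq nat) : option nat :=
  if nth 0 I t \in c then None else if size c < k then None
  else Some (lfd_victim tb I t c (drop t.+1 I)).
Definition lnext t (c : seq nat) : seq nat :=
  if nth 0 I t \in c then c else if size c < k then nth 0 I t :: c
  else nth 0 I t :: rem (lfd_victim tb I t c (drop t.+1 I)) c.
Fixpoint lst t := match t with 0 => [::] | t'.+1 => lnext t' (lst t') end.

Lemma lfd_run_eq d : forall j, size I = j + d ->
  lfd_run k tb I j (lst j) (drop j I) = [seq lout t (lst t) | t <- iota j d].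
Proof.
elim: d => [|d IH] j e.
  by rewrite drop_oversize //= e addn0.
rewrite (drop_nth 0) ?e; last lia.
rewrite /= -IH; last lia.
rewrite /lout /=; rewrite /lnext; case: ifP => h1 //; case: ifP => h2 //.
Qed.

Lemma ev_eq t : t < size I -> nth None (lfd_evictions k tb I) t = lout t (lst t).
Proof.
move=> h; rewrite /lfd_evictions -[I in lfd_run _ _ _ _ _ I]drop0.
rewrite (@lfd_run_eq (size I)) // (nth_map 0) ?size_iota // nth_iota //.
Qed.

Lemma lst_inv t : 1 <= k -> uniq (lst t) /\ size (lst t) <= k.
Proof.
move=> k1; elim: t => [|t [u s]] //=; rewrite /lnext; case: ifP => hin //.
case: ifP => hs; first by rewrite /= hin u.
split; first by rewrite /= rem_uniq // andbT; apply/negP => /mem_rem; rewrite hin.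
have ne : lst t != [::] by apply/eqP => e; rewrite e /= k1 in hs.
by rewrite /= size_rem ?prednK ?lt0n ?size_eq0 // victim_in.
Qed.

End LFD.

Lemma count_ev k tb I (Q : pred (option nat)) :
  count (fun j => Q (nth None (lfd_evictions k tb I) j)) (iota 0 (size I)) =
  count Q (lfd_evictions k tb I).
Proof.
have sz : size (lfd_evictions k tb I) = size I by rewrite /lfd_evictions size_lfd_run.
rewrite -{2}(mkseq_nth None (lfd_evictions k tb I)) /mkseq count_map sz.
by apply: eq_count.
Qed.

Lemma truth1_le k tb I :
  count (fun i => discard_truth k tb I i) (iota 0 (size I)) <= count isSome (lfd_evictions k tb I).
Proof.
rewrite -count_ev.
set ev := lfd_evictions k tb I.
set P := fun i j => (i < j) && (j < next_req I i) && (nth None ev j == Some (nth 0 I i)).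
apply: (@count_inj _ _ (fun i => wit (P i) (size I))).
  move=> i il h; have [w1 w2 _] := witP h; split => //.
  by move: w2; rewrite /P => /andP[_ /eqP ->].
move=> i i' il il' h h' e.
have [w1 w2 _] := witP h; have [w1' w2' _] := witP h'.
rewrite -e in w2'; move: w2 w2'; rewrite /P.
set j := wit _ _ => /andP[/andP[ij jn] /eqP ej] /andP[/andP[ij' jn'] /eqP ej'].
have ex : nth 0 I i = nth 0 I i' by move: ej; rewrite ej' => -[].
case: (ltngtP i i') => // lt.
  by have := NR lt (ltn_trans ij' jn); rewrite ex eqxx.
by have := NR lt (ltn_trans ij jn'); rewrite ex eqxx.
Qed.

Lemma stay k tb I i : 1 <= k -> i < size I -> ~~ discard_truth k tb I i ->
  forall d, i.+1 + d <= next_req I i -> i.+1 + d <= size I ->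
  nth 0 I i \in lst k tb I (i.+1 + d).
Proof.
move=> k1 il nt; elim=> [|d IH] h1 h2.
  rewrite addn0 /= /lnext; case: ifP => // _; case: ifP => _; exact: mem_head.
have h1' : i.+1 + d <= next_req I i by lia.
have h2' : i.+1 + d <= size I by lia.
have := IH h1' h2'; set s := i.+1 + d => xin.
rewrite addnS (_ : lst k tb I s.+1 = lnext k tb I s (lst k tb I s)) // /lnext; case: ifP => // hin; case: ifP => hs; first by rewrite in_cons xin orbT.
rewrite in_cons; apply/orP; right.
have [u _] := @lst_inv k tb I s k1.
rewrite rem_mem //; apply/negP => /eqP e.
move/negP: nt; apply; apply/hasP; exists s; first by rewrite mem_iota; lia.
rewrite (ev_eq _ _ (_ : s < size I)); last lia.
rewrite /lout hin hs -e eqxx andbT; apply/andP; split; lia.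
Qed.

Lemma truth0_le k tb I : 1 <= k -> all (fun x => x < k.+1) I ->
  count (fun i => ~~ discard_truth k tb I i) (iota 0 (size I)) <=
  size I - count isSome (lfd_evictions k tb I) + k.+1.
Proof.
move=> k1 Ib.
set n := size I.
set ev := lfd_evictions k tb I.
have hN : count (fun j => nth None ev j == None) (iota 0 n) = n - count isSome ev.
  rewrite count_ev.
  have := count_predC isSome ev; rewrite /ev /lfd_evictions size_lfd_run -/ev -/n => <-.
  rewrite addKn; apply: eq_count => o; by case: o.
rewrite -hN.
apply: leq_trans (count_iota_ext _ _ _).
apply: (@count_inj _ _ (fun i => if next_req I i < n then next_req I i else n + nth 0 I i)).
  move=> i il h; case: ifP => hn.
    split; first lia.
    rewrite hn /=; apply/orP; left; apply/eqP.
    rewrite ev_eq // /lout.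
    have : next_req I i = i.+1 + (next_req I i - i.+1) by rewrite /next_req; lia.
    move=> eqn.
    have := @stay k tb I i k1 il h (next_req I i - i.+1); rewrite -eqn => /(_ (leqnn _) (ltnW hn)).
    by rewrite -(next_req_nth hn) => ->.
  split; first by rewrite ltn_add2l; move/allP: Ib; apply; rewrite mem_nth.
  by rewrite /= leq_addr orbT.
move=> i i' il il' _ _.
have nri := next_req_le il; have nri' := next_req_le il'.
case: ifP => h1; case: ifP => h2 => e.
- have ex : nth 0 I i = nth 0 I i' by rewrite -(next_req_nth h1) e (next_req_nth h2).
  case: (ltngtP i i') => // lt.
    have hlt : i' < next_req I i by rewrite e /next_req leq_addr.
    by have := NR lt hlt; rewrite ex eqxx.
  have hlt : i < next_req I i' by rewrite -e /next_req leq_addr.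
  by have := NR lt hlt; rewrite ex eqxx.
- by move: h1; rewrite e ltnNge leq_addr.
- by move: h2; rewrite -e ltnNge leq_addr.
- have ex : nth 0 I i = nth 0 I i' by apply/eqP; rewrite -(eqn_add2l n) e.
  case: (ltngtP i i') => // lt.
    have hlt : i' < next_req I i by apply: leq_trans il' _; rewrite leqNgt h1.
    by have := NR lt hlt; rewrite ex eqxx.
  have hlt : i < next_req I i' by apply: leq_trans il _; rewrite leqNgt h2.
  by have := NR lt hlt; rewrite ex eqxx.
Qed.

Section Phases.
Variables (k : nat) (I : seq nat).
Hypothesis k1 : 1 <= k.

Definition pstep (s : seq nat * nat) r :=
  if r \in s.1 then s else if size s.1 < k then (r :: s.1, s.2) else ([:: r], s.2.+1).
Fixpoint pst t := match t with 0 => ([::], 0) | t'.+1 => pstep (pst t') (nth 0 I t') end.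

Lemma pstS t : pst t.+1 = pstep (pst t) (nth 0 I t). Proof. by []. Qed.

Lemma phase_run_eq d : forall j, size I = j + d ->
  phase_run k (pst j).1 (pst j).2 (drop j I) = [seq (pst t.+1).2 | t <- iota j d].
Proof.
elim: d => [|d IH] j e.
  by have -> : drop j I = [::] by apply: drop_oversize; rewrite e ?addn0.
rewrite (drop_nth 0) ?e; last lia.
rewrite /= -IH; last lia.
rewrite pstS /pstep; case: ifP => h1 //; case: ifP => h2 //.
Qed.

Lemma phase_of_eq t : t < size I -> phase_of k I t = (pst t.+1).2.
Proof.
move=> h; rewrite /phase_of /phase_ids -[I in phase_run _ _ _ I]drop0.
rewrite (@phase_run_eq (size I) 0) // (nth_map 0) ?size_iota // nth_iota //.
Qed.

Lemma pst_step t : (pst t.+1).2 = (pst t).2 \/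
  [/\ (pst t.+1).2 = (pst t).2.+1, nth 0 I t \notin (pst t).1, size (pst t).1 >= k
    & (pst t.+1).1 = [:: nth 0 I t]].
Proof.
rewrite pstS /pstep; case: ifP => h1; first by left.
case: ifP => h2; first by left.
right; split => //; by rewrite leqNgt h2.
Qed.

Lemma pst_inv t : [/\ uniq (pst t).1, size (pst t).1 <= k & k * (pst t).2 + size (pst t).1 <= t].
Proof.
elim: t => [|t [u s c]]; first by split => //=; rewrite muln0. rewrite pstS /pstep; case: ifP => h1; first by split => //; lia.
case: ifP => h2 /=; first by rewrite h1 u; split => //; lia.
split => //; move/negbT: h2; rewrite -leqNgt => h2; lia.
Qed.

Lemma pst_mono s t : s <= t -> (pst s).2 <= (pst t).2.
Proof.
move/subnKC <-; elim: (t - s) => [|d IH]; first by rewrite addn0.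
rewrite addnS; apply: leq_trans IH _.
by case: (pst_step (s + d)) => [->|[-> _ _ _]].
Qed.

Lemma pst_mem t x : (x \in (pst t).1) =
  has (fun s => ((pst s.+1).2 == (pst t).2) && (nth 0 I s == x)) (iota 0 t).
Proof.
elim: t x => [|t IH] x //.
rewrite -addn1 iotaD has_cat /= orbF add0n addn1.
case: (pst_step t) => [e|[e hn _ e1]].
  rewrite e eqxx /=.
  have -> : has (fun s => ((pst s.+1).2 == (pst t).2) && (nth 0 I s == x)) (iota 0 t) = (x \in (pst t).1) by rewrite IH.
  move: e; rewrite pstS /pstep; case: ifP => h1.
    move=> _; case: (eqVneq (nth 0 I t) x) => [<-|_]; by rewrite ?h1 ?orbF.
  case: ifP => h2 /= e'; last by exfalso; lia.
  by rewrite in_cons orbC eq_sym.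
rewrite e1 e eqxx /= in_cons in_nil orbF eq_sym.
rewrite (@eq_in_has _ _ pred0) ?has_pred0 //.
move=> s; rewrite mem_iota add0n => /andP[_ st].
have := pst_mono st; rewrite /=; case: (eqVneq (pst s.+1).2 (pst t).2.+1) => //= ->; lia.
Qed.

Definition newev t := (pst t.+1).2 == (pst t).2.+1.
Definition addev t := (nth 0 I t \notin (pst t).1) && (size (pst t).1 < k).

Lemma count_newev t : count newev (iota 0 t) <= (pst t).2.
Proof.
elim: t => [|t IH] //.
rewrite -addn1 iotaD count_cat /= add0n addn1 addn0 /newev.
case: (pst_step t) => [->|[-> _ _ _]]; last by rewrite eqxx /= addn1 ltnS.
have -> : ((pst t).2 == (pst t).2.+1) = false by apply/eqP; lia.
by rewrite addn0.
Qed.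

Lemma count_addev t : count addev (iota 0 t) <= k.-1 * (pst t).2 + size (pst t).1.
Proof.
elim: t => [|t IH] //.
rewrite -{1}addn1 iotaD count_cat add0n (_ : count addev (iota t 1) = addev t); last by rewrite /= addn0.
move: IH; rewrite pstS; set C := count _ _; rewrite /addev /pstep.
case: ifP => h1 /= IH; first by rewrite addn0.
case: ifP => h2 /=; first by rewrite addn1 addnS ltnS.
have [_ s _] := pst_inv t.
move/negbT: h2; rewrite -leqNgt => h2; rewrite addn0.
have e : size (pst t).1 = k by apply/eqP; rewrite eqn_leq s h2.
rewrite e in IH; rewrite mulnS; lia.
Qed.

End Phases.

Section PB.
Variables (k : nat) (I : seq nat).
Hypothesis k1 : 1 <= k.
Local Notation n := (size I).
Local Notation pst := (pst k I).
Local Notation ph := (phase_of k I).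

Lemma pst_le t : (pst t.+1).2 <= (pst t).2.+1.
Proof. by case: (pst_step k I t) => [->|[-> _ _ _]]. Qed.

Lemma pst_notin t : nth 0 I t \notin (pst t).1 -> (pst t.+1).2 = (pst t).2 -> size (pst t).1 < k.
Proof.
move=> h; rewrite pstS /pstep (negbTE h); case: ifP => //= _ e; lia.
Qed.

Lemma last_ph : 0 < n -> ph n.-1 = (pst n).2.
Proof. by move=> h; rewrite phase_of_eq ?prednK // ltn_predL. Qed.

Lemma counted_uniq i i' : i < n -> i' < n -> counted k I i -> counted k I i' ->
  ph i = ph i' -> nth 0 I i = nth 0 I i' -> i = i'.
Proof.
move=> il il' /andP[_ c] /andP[_ c'] e1 e2.
case: (ltngtP i i') => // lt; exfalso.
  by move/negP: c; apply; apply/hasP; exists i'; rewrite ?mem_iota // lt e1 e2 !eqxx.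
by move/negP: c'; apply; apply/hasP; exists i; rewrite ?mem_iota // lt e1 e2 !eqxx.
Qed.

Lemma phase_eta1_le :
  count (fun i => counted k I i && ~~ phase_truth k I i) (iota 0 n) <= count (addev k I) (iota 0 n).
Proof.
apply: (@count_inj _ _ (fun i => wit (fun t => (ph t == (ph i).+1) && (nth 0 I t == nth 0 I i)) n)).
  move=> i il /andP[ci]; rewrite negbK => h.
  have [w1 /andP[/eqP w2 /eqP w3] w4] := witP h.
  set t := wit _ _ in w1 w2 w3 w4 *.
  split => //.
  rewrite phase_of_eq // in w2; rewrite phase_of_eq // in w2.
  have it : i < t.
    rewrite ltnNge; apply/negP => ti.
    have := pst_mono k I (_ : t.+1 <= i.+1); rewrite ltnS => /(_ ti); rewrite w2; lia.
  rewrite /addev w3.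
  have notin : nth 0 I i \notin (pst t).1.
    case: (pst_step k I t) => [e|[e hn _ _]]; last by rewrite -w3.
    rewrite (pst_mem I k1); apply/negP; case/hasP => s; rewrite mem_iota add0n => /andP[_ st] /andP[/eqP e1 /eqP e2].
    have st' : s < n by apply: ltn_trans st w1.
    have := w4 s st; rewrite (phase_of_eq k1 st') (phase_of_eq k1 il) e1 -e w2 e2 !eqxx. by [].
  rewrite notin /=.
  case: (pst_step k I t) => [e|[e hn _ _]]; first by apply: pst_notin; rewrite ?w3.
  exfalso; move: hn; rewrite w3 (pst_mem I k1) => /negP; apply; apply/hasP; exists i.
    by rewrite mem_iota add0n.
  by rewrite eqxx andbT; apply/eqP; move: w2; rewrite e; case.
move=> i i' il il' /andP[ci]; rewrite negbK => h /andP[ci']; rewrite negbK => h' e.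
have [_ /andP[/eqP w2 /eqP w3] _] := witP h.
have [_ /andP[/eqP w2' /eqP w3'] _] := witP h'.
rewrite -e in w2' w3'.
apply: counted_uniq => //; last by rewrite -w3 w3'.
by move: w2; rewrite w2' => -[].
Qed.

Lemma phase_eta0_le : all (fun x => x < k.+1) I ->
  count (fun i => counted k I i && phase_truth k I i) (iota 0 n) <=
  count (newev k I) (iota 0 n) + k.+1.
Proof.
move=> Ib.
apply: leq_trans (count_iota_ext _ _ _).
pose f i := if (ph i).+2 <= (pst n).2
  then wit (fun t => (ph i).+2 <= (pst t.+1).2) n else n + nth 0 I i.
have wex : forall i, i < n -> (ph i).+2 <= (pst n).2 -> has (fun t => (ph i).+2 <= (pst t.+1).2) (iota 0 n).
  move=> i il h; apply/hasP; exists n.-1; first by rewrite mem_iota add0n ltn_predL; lia.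
  by rewrite prednK //; lia.
have wprop : forall i, i < n -> (ph i).+2 <= (pst n).2 ->
    let e := wit (fun t => (ph i).+2 <= (pst t.+1).2) n in
    [/\ e < n, (pst e).2 = (ph i).+1 & (pst e.+1).2 = (ph i).+2].
  move=> i il h e; have [w1 w2 w3] := witP (wex i il h); rewrite -/e in w1 w2 w3.
  have pe : (pst e).2 < (ph i).+2.
    case E: e => [|e']; first by [].
    by have := w3 e'; rewrite E ltnSn => /(_ isT); rewrite -leqNgt.
  have := pst_le e; split => //; lia.
apply: (@count_inj _ _ f).
  move=> i il /andP[ci ti]; rewrite /f; case: ifP => h.
    have [w1 w2 w3] := wprop i il h.
    split; first by apply: ltn_addr.
    by rewrite w1 /newev w2 w3 eqxx.
  split; last by rewrite leq_addr orbT.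
  by rewrite ltn_add2l; move/allP: Ib; apply; rewrite mem_nth.
have notin : forall i, i < n -> phase_truth k I i -> (ph i).+2 <= (pst n).2 ->
    nth 0 I i \notin (pst (wit (fun t => (ph i).+2 <= (pst t.+1).2) n)).1.
  move=> i il ti h; have [w1 w2 w3] := wprop i il h.
  rewrite (pst_mem I k1) w2; apply/negP; case/hasP => s; rewrite mem_iota add0n => /andP[_ se] /andP[/eqP e1 /eqP e2].
  move/negP: ti; apply; apply/hasP; exists s; first by rewrite mem_iota add0n (ltn_trans se w1).
  by rewrite (phase_of_eq k1 (ltn_trans se w1)) e1 e2 !eqxx.
move=> i i' il il' /andP[ci ti] /andP[ci' ti']; rewrite /f.
have lt : forall j, j < n -> counted k I j -> ph j < (pst n).2.
  by move=> j jl /andP[h _]; rewrite -last_ph //; lia.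
case: ifP => h; case: ifP => h'.
- move=> e.
  have [w1 w2 w3] := wprop i il h; have [w1' w2' w3'] := wprop i' il' h'.
  rewrite -e in w1' w2' w3'.
  have eq1 : ph i = ph i' by move: w2; rewrite w2' => -[].
  have ni := notin i il ti h; have ni' := notin i' il' ti' h'; rewrite -e in ni'.
  apply: counted_uniq => //.
  set e0 := wit _ _ in w1 w2 w3 ni ni'.
  apply/eqP; apply/negP => /negP neq.
  have [u sz _] := pst_inv I k1 e0.
  have szk : size (pst e0).1 = k.
    case: (pst_step k I e0) => [ee|[_ _ h2 _]]; first by move: ee; rewrite w2 w3; lia.
    by apply/eqP; rewrite eqn_leq sz h2.
  have cb : forall c, c \in (pst e0).1 -> c < k.+1.
    move=> c; rewrite (pst_mem I k1) => /hasP[s]; rewrite mem_iota add0n => /andP[_ se] /andP[_ /eqP <-].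
    by move/allP: Ib; apply; rewrite mem_nth // (ltn_trans se w1).
  have xk : nth 0 I i < k.+1 by move/allP: Ib; apply; rewrite mem_nth.
  have xk' : nth 0 I i' < k.+1 by move/allP: Ib; apply; rewrite mem_nth.
  have := full_cover u cb szk ni xk xk'; rewrite eq_sym neq => /(_ isT).
  by rewrite (negbTE ni').
- move=> e; have [w1 _ _] := wprop i il h; move: w1; rewrite e; lia.
- move=> e; have [w1 _ _] := wprop i' il' h'; move: w1; rewrite -e; lia.
- move=> e; have ex : nth 0 I i = nth 0 I i' by apply/eqP; rewrite -(eqn_add2l n) e.
  apply: counted_uniq => //.
  have := lt i il ci; have := lt i' il' ci'; move/negbT: h; move/negbT: h'; lia.
Qed.

End PB.

Lemma leR m n : m <= n -> (INR m <= INR n)%R.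
Proof. move/leP; exact: le_INR. Qed.
Lemma INRD m n : INR (m + n) = (INR m + INR n)%R.
Proof. exact: plus_INR. Qed.
Lemma INRM m n : INR (m * n) = (INR m * INR n)%R.
Proof. exact: mult_INR. Qed.
Lemma INRB m n : n <= m -> INR (m - n) = (INR m - INR n)%R.
Proof. move/leP; exact: minus_INR. Qed.

Lemma no_bound (c M : R) : (0 < c)%R -> (forall n, c * INR n <= M)%R -> False.
Proof.
move=> c0 H; have [n hn] := INR_archimed c M c0.
have := H n; lra.
Qed.

Lemma R1 (a bt b k n S : R) : (0 < k -> 0 <= a -> 0 <= bt ->
  n <= a * (k + S) + bt * S + b -> k * S <= n + k ->
  (k - a - bt) * n <= a * k * k + (a + bt) * k + b * k)%R.
Proof.
move=> k0 ha hb H HS.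
have h1 := Rmult_le_compat_l k _ _ (Rlt_le _ _ k0) H.
have h2 : (0 <= a + bt)%R by lra.
have h3 := Rmult_le_compat_l (a + bt) _ _ h2 HS.
nra.
Qed.

Lemma R2 (a g b k n S E : R) : (0 < k -> g <= a -> 0 <= g ->
  n <= a * (k + S) + g * E + b -> E <= n - S + k + 1 -> k * S <= n + k ->
  (k - a - (k - 1) * g) * n <= a * k * k + (a - g) * k + g * k * (k + 1) + b * k)%R.
Proof.
move=> k0 ga g0 H HE HS.
have h1 := Rmult_le_compat_l k _ _ (Rlt_le _ _ k0) H.
have h2 : (0 <= a - g)%R by lra.
have h3 := Rmult_le_compat_l (a - g) _ _ h2 HS.
have h4 : (0 <= g * k)%R by nra.
have h5 := Rmult_le_compat_l (g * k) _ _ h4 HE.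
nra.
Qed.

Lemma R3 (a bt b k n S E P : R) : (0 < k -> 0 <= a -> 0 <= bt ->
  n <= a * (k + S) + bt * E + b -> E <= P + k + 1 -> k * P <= n -> k * S <= n + k ->
  (k - a - bt) * n <= a * k * k + a * k + bt * k * (k + 1) + b * k)%R.
Proof.
move=> k0 ha hb H HE HP HS.
have h1 := Rmult_le_compat_l k _ _ (Rlt_le _ _ k0) H.
have h3 := Rmult_le_compat_l a _ _ ha HS.
have h4 : (0 <= bt * k)%R by nra.
have h5 := Rmult_le_compat_l (bt * k) _ _ h4 HE.
have h6 := Rmult_le_compat_l bt _ _ hb HP.
nra.
Qed.

Lemma R4 (a g b k n S E P : R) : (0 < k -> 0 <= a -> 0 <= g -> 1 <= k ->
  n <= a * (k + S) + g * E + b -> E <= (k - 1) * P + k -> k * P <= n -> k * S <= n + k ->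
  (k - a - (k - 1) * g) * n <= a * k * k + a * k + g * k * k + b * k)%R.
Proof.
move=> k0 ha hg k1 H HE HP HS.
have h1 := Rmult_le_compat_l k _ _ (Rlt_le _ _ k0) H.
have h3 := Rmult_le_compat_l a _ _ ha HS.
have h4 : (0 <= g * k)%R by nra.
have h5 := Rmult_le_compat_l (g * k) _ _ h4 HE.
have h7 : (0 <= g * (k - 1))%R by nra.
have h6 := Rmult_le_compat_l (g * (k - 1)) _ _ h7 HP.
nra.
Qed.

Lemma etaD_ff k tb I : eta_discard k tb I (fun _ => false) false = count (discard_truth k tb I) (iota 0 (size I)).
Proof. by apply: eq_count => i /=; case: discard_truth. Qed.
Lemma etaD_ft k tb I : eta_discard k tb I (fun _ => false) true = 0.
Proof. by rewrite /eta_discard (@eq_count _ _ pred0) ?count_pred0. Qed.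
Lemma etaD_tf k tb I : eta_discard k tb I (fun _ => true) false = 0.
Proof. by rewrite /eta_discard (@eq_count _ _ pred0) ?count_pred0. Qed.
Lemma etaD_tt k tb I : eta_discard k tb I (fun _ => true) true =
  count (fun i => ~~ discard_truth k tb I i) (iota 0 (size I)).
Proof. by apply: eq_count => i /=; case: discard_truth. Qed.
Lemma etaD_exact k tb I h : eta_discard k tb I (discard_truth k tb I) h = 0.
Proof. by rewrite /eta_discard (@eq_count _ _ pred0) ?count_pred0 // => i /=; case: discard_truth; case: h. Qed.

Lemma etaP_ff k I : eta_phase k I (fun _ => false) false =
  count (fun i => counted k I i && phase_truth k I i) (iota 0 (size I)).
Proof. by apply: eq_count => i /=; case: phase_truth; case: counted. Qed.
Lemma etaP_ft k I : eta_phase k I (fun _ => false) true = 0.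
Proof. by rewrite /eta_phase (@eq_count _ _ pred0) ?count_pred0 // => i /=; rewrite andbF. Qed.
Lemma etaP_tf k I : eta_phase k I (fun _ => true) false = 0.
Proof. by rewrite /eta_phase (@eq_count _ _ pred0) ?count_pred0 // => i /=; rewrite andbF. Qed.
Lemma etaP_tt k I : eta_phase k I (fun _ => true) true =
  count (fun i => counted k I i && ~~ phase_truth k I i) (iota 0 (size I)).
Proof. by apply: eq_count => i /=; case: phase_truth; case: counted. Qed.
Lemma etaP_exact k I h : eta_phase k I (phase_truth k I) h = 0.
Proof. by rewrite /eta_phase (@eq_count _ _ pred0) ?count_pred0 // => i /=; case: phase_truth; case: h; rewrite ?andbF. Qed.

Lemma small_a k A eta (a bt g b : R) : (0 <= a < 1)%R ->
  (forall I, exists p, eta I p false = 0 /\ eta I p true = 0) ->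
  (forall I p, INR (alg_cost k A I p) <= a * INR (OPT k I) + bt * INR (eta I p false) + g * INR (eta I p true) + b)%R ->
  False.
Proof.
move=> [a0 a1] He Hb; apply: (@no_bound (1 - a) b); first lra.
move=> n; have [p [e0 e1]] := He (iota 0 n).
have := Hb (iota 0 n) p; rewrite alg_cost_iota e0 e1 /=.
have := leR (opt_le_size k [::] (iota 0 n)); rewrite size_iota /OPT => ho.
have := Rmult_le_compat_l a _ _ a0 ho. lra.
Qed.

Lemma lfd_bounds k tb I : 1 <= k -> all (fun x => x < k.+1) I ->
  let S := count isSome (lfd_evictions k tb I) in
  [/\ OPT k I <= k + S, k * S <= size I + k & S <= size I].
Proof.
move=> k1 Ib S.
have h1 := @opt_le_lfd k tb I I k1 0 [::] (leq0n _).
rewrite subn0 in h1.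
have h2 := @lfd_spacing k tb I k1 (size I) I 0 [::] (leqnn _) isT (fun c (h : c \in [::]) => ltac:(by [])) (leq0n _) Ib.
split => //.
  apply: leq_trans (_ : k * ((size I + k.-1) %/ k) <= _).
    by rewrite leq_mul2l h2 orbT.
  rewrite mulnC; apply: leq_trans (leq_divM _ _) _; lia.
by rewrite /S -(size_lfd_run k tb I 0 [::] I) count_size.
Qed.

Theorem theorem5 (k : nat) (hk : (1 <= k)%N) (a bt g : R)
  (ha : (0 <= a)%R) (hbt : (0 <= bt)%R) (hg : (0 <= g)%R)
  (hlt : (a + bt < INR k)%R \/ (a + (INR k - 1) * g < INR k)%R) :
  (forall (tb : TieRule) (A : Alg), ~ competitive k A (eta_discard k tb) a bt g) /\
  (forall A : Alg, ~ competitive k A (eta_phase k) a bt g).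
Proof.
have k0 : (0 < INR k)%R by apply: lt_0_INR; apply/leP.
have k1R : (1 <= INR k)%R by have := leR hk.
split.
- move=> tb A [b Hb].
  case: (Rlt_or_le a 1) => ha1.
    apply: (small_a (k := k) (A := A) (eta := eta_discard k tb) (a := a) (bt := bt) (g := g) (b := b)) => //.
    by move=> I; exists (discard_truth k tb I); rewrite !etaD_exact.
  case: hlt => hc.
  + apply: (@no_bound (INR k - a - bt) (a * INR k * INR k + (a + bt) * INR k + b * INR k)); first lra.
    move=> n; have [hA [hs hb]] := @alg_cost_adv k A false n hk.
    set I := adv _ _ _ _ _ _ in hA hs hb.
    have [o1 o2 o3] := lfd_bounds tb hk hb.
    set S := count _ _ in o1 o2 o3.
    have t1 := truth1_le k tb I.
    have := Hb I (fun _ => false); rewrite hA etaD_ff etaD_ft.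
    move=> H.
    apply: (R1 k0 ha hbt _ (_ : INR k * INR S <= INR n + INR k)%R).
      have e1 := Rmult_le_compat_l a _ _ ha (leR o1); rewrite INRD in e1.
      have e2 : (bt * INR (count (discard_truth k tb I) (iota 0 (size I))) <= bt * INR S)%R.
        by apply: Rmult_le_compat_l => //; apply: leR; exact: t1.
      simpl in H. lra.
    by rewrite -INRM -hs -INRD; apply: leR.
  + have g1 : (g < 1)%R by nra.
    apply: (@no_bound (INR k - a - (INR k - 1) * g)
       (a * INR k * INR k + (a - g) * INR k + g * INR k * (INR k + 1) + b * INR k)); first lra.
    move=> n; have [hA [hs hb]] := @alg_cost_adv k A true n hk.
    set I := adv _ _ _ _ _ _ in hA hs hb.
    have [o1 o2 o3] := lfd_bounds tb hk hb.
    set S := count _ _ in o1 o2 o3.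
    have t0 := truth0_le tb hk hb.
    have := Hb I (fun _ => true); rewrite hA etaD_tf etaD_tt.
    move=> H.
    set E := count _ _ in H t0.
    apply: (R2 (S := INR S) (E := INR E) k0 _ hg _ _ (_ : INR k * INR S <= INR n + INR k)%R).
    * lra.
    * have e1 := Rmult_le_compat_l a _ _ ha (leR o1); rewrite INRD in e1.
      simpl in H. lra.
    * have := leR t0; rewrite INRD INRB; last exact: o3. rewrite S_INR -/S hs; lra.
    * by rewrite -INRM -hs -INRD; apply: leR.
- move=> A [b Hb].
  pose tb : TieRule := fun _ _ _ => 0.
  case: (Rlt_or_le a 1) => ha1.
    apply: (small_a (k := k) (A := A) (eta := eta_phase k) (a := a) (bt := bt) (g := g) (b := b)) => //.
    by move=> I; exists (phase_truth k I); rewrite !etaP_exact.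
  case: hlt => hc.
  + apply: (@no_bound (INR k - a - bt)
      (a * INR k * INR k + a * INR k + bt * INR k * (INR k + 1) + b * INR k)); first lra.
    move=> n; have [hA [hs hb]] := @alg_cost_adv k A false n hk.
    set I := adv _ _ _ _ _ _ in hA hs hb.
    have [o1 o2 o3] := lfd_bounds tb hk hb.
    set S := count _ _ in o1 o2 o3.
    have t1 := phase_eta0_le hk hb.
    have t2 := count_newev I hk (size I).
    have [_ _ t3] := pst_inv I hk (size I).
    have := Hb I (fun _ => false); rewrite hA etaP_ff etaP_ft.
    move=> H.
    set E := count _ _ in H t1.
    set P := (pst k I (size I)).2 in t2 t3.
    apply: (R3 (S := INR S) (E := INR E) (P := INR P) k0 ha hbt _ _ _ (_ : INR k * INR S <= INR n + INR k)%R).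
    * have e1 := Rmult_le_compat_l a _ _ ha (leR o1); rewrite INRD in e1.
      simpl in H. lra.
    * have := leR (leq_trans t1 (leq_add t2 (leqnn _))); rewrite !INRD S_INR; lra.
    * rewrite -INRM -hs; apply: leR; apply: leq_trans t3; exact: leq_addr.
    * by rewrite -INRM -hs -INRD; apply: leR.
  + apply: (@no_bound (INR k - a - (INR k - 1) * g)
      (a * INR k * INR k + a * INR k + g * INR k * INR k + b * INR k)); first lra.
    move=> n; have [hA [hs hb]] := @alg_cost_adv k A true n hk.
    set I := adv _ _ _ _ _ _ in hA hs hb.
    have [o1 o2 o3] := lfd_bounds tb hk hb.
    set S := count _ _ in o1 o2 o3.
    have t1 := phase_eta1_le I hk.
    have t2 := count_addev I hk (size I).
    have [_ t4 t3] := pst_inv I hk (size I).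
    have := Hb I (fun _ => true); rewrite hA etaP_tf etaP_tt.
    move=> H.
    set E := count _ _ in H t1.
    set P := (pst k I (size I)).2 in t2 t3 t4.
    apply: (R4 (S := INR S) (E := INR E) (P := INR P) k0 ha hg k1R _ _ _ (_ : INR k * INR S <= INR n + INR k)%R).
    * have e1 := Rmult_le_compat_l a _ _ ha (leR o1); rewrite INRD in e1.
      simpl in H. lra.
    * have := leR (leq_trans t1 (leq_trans t2 (leq_add (leqnn _) t4))).
      rewrite INRD INRM -subn1 INRB //; lra.
    * rewrite -INRM -hs; apply: leR; apply: leq_trans t3; exact: leq_addr.
    * by rewrite -INRM -hs -INRD; apply: leR.
Qed.
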